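(* Let $m\in\frac12\mathbb{N}$ and $\sigma\in\Phi^m(SU_q(2))$ be such that $\sigma(l)=0$ for all $l>N$, for some $N\in\mathbb{N}$. Then $T_\sigma$ is of finite rank.
   Context: Fix $0<q<1$. $SU_q(2)$ is the $*$-algebra generated by $a,c$ with $ac^*=qc^*a$, $ca^*=qa^*c$, $c^*a^*=qa^*c^*$, $c^*c=cc^*$, $aa^*+q^2c^*c=a^*a+c^*c=1$, with Haar state $h$. For $l\in\frac12\mathbb{N}$, $T^l=[t^l_{ij}]_{-l\le i,j\le l}$ is the irreducible unitary matrix corepresentation of dimension $2l+1$; $\{t^l_{ij}\}$ is an orthogonal basis with $h(t^l_{ij}(t^l_{ij})^* )=[2l+1]_q^{-1}q^{2j}$, $[x]_q=\frac{q^x-q^{-x}}{q-q^{-1}}$. Fourier transform: $\hat f(l)_{mn}=h(f(t^l_{nm})^* )$. $Tr_q(M)=Tr(D_qM)$, $D_q=\mathrm{diag}(q^{-2i})_{-l\le i\le l}$. A symbol is a map $\sigma:\frac12\mathbb{N}\to\bigcup_lM_{2l+1}(\mathbb{C})\otimes SU_q(2)$, with operator $T_\sigma f=\sum_l[2l+1]_qTr_q(\sigma(l)\hat f(l)T^l)$. With $I_{2l+1}=\{-l,\dots,l\}$: $\sigma$ is homogeneous of Fourier order $m\in\frac12\mathbb{N}$ if for each $l$ there is $\psi_\sigma(l):I_{2l+1}^2\to I_{2l+1}^2$ with $\sigma(l)_{ij}\in\mathrm{Span}\{t^m_{\psi_\sigma(l)(i,j)}\}$ and $\sigma(l)_{ij}=0$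 when $\psi_\sigma(l)(i,j)\notin I_{2m+1}^2$; $\Phi^m(SU_q(2))$ consists of finite linear combinations of such symbols. *)

(* Defs.v *)
From HB Require Import structures.
From mathcomp Require Import all_boot all_order all_algebra.
From Stdlib Require Import ClassicalEpsilon.
Set Implicit Arguments. Unset Strict Implicit. Unset Printing Implicit Defensive.
Import Order.TTheory GRing.Theory Num.Theory.
Local Open Scope ring_scope.

(* Conventions.
   - A spin l in (1/2)N is encoded by n = 2l : nat.
   - A half-integer index i in I_{2l+1} = {-l,...,l} is encoded by the
     integer x = 2i; so I_{2l+1} corresponds to
     {x : int | |x| <= n and x = n mod 2}.
   - The element a : 'I_n.+1 encodes the doubled index  2a - n.
   - t n x y stands for t^{n/2}_{x/2, y/2}; a symbol sigma is encoded by
     sigma n x y = sigma(n/2)_{x/2, y/2}. *)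

Definition inI (n : nat) (x : int) : bool :=
  (absz x <= n)%N && (odd (absz x) == odd n).

Definition idx (n : nat) (a : 'I_n.+1) : int := (2 * a)%:Z - n%:Z.

Section Defs.
Variable C : numClosedFieldType.

Definition qint (q : C) (x : int) : C := (q ^ x - q ^ (- x)) / (q - q^-1).

(* The data of SU_q(2): a complex *-algebra A with generators a, c,
   Haar state h and the matrix coefficients t of the irreducible unitary
   corepresentations. *)
Record SUq2 (q : C) (A : algType C) (a c : A) (star : A -> A) (h : A -> C)
  (t : nat -> int -> int -> A) : Prop := {
  star_add : forall x y, star (x + y) = star x + star y;
  star_scale : forall (k : C) x, star (k *: x) = k^* *: star x;
  star_mul : forall x y, star (x * y) = star y * star x;
  star_inv : forall x, star (star x) = x;
  rel1 : a * star c = q *: (star c * a);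
  rel2 : c * star a = q *: (star a * c);
  rel3 : star c * star a = q *: (star a * star c);
  rel4 : star c * c = c * star c;
  rel5 : a * star a + q ^+ 2 *: (star c * c) = 1;
  rel6 : star a * a + star c * c = 1;
  h_linear : forall (k : C) x y, h (k *: x + y) = k * h x + h y;
  h_unit : h 1 = 1;
  h_pos : forall x, 0 <= h (x * star x);
  t_span : forall f : A, exists N (k : nat -> int -> int -> C),
      f = \sum_(n < N) \sum_(i < n.+1) \sum_(j < n.+1)
            k n (@idx n i) (@idx n j) *: t n (@idx n i) (@idx n j);
  t_orth : forall n x y n' x' y', inI n x -> inI n y -> inI n' x' -> inI n' y' ->
      h (t n x y * star (t n' x' y')) =
      if [&& n == n', x == x' & y == y'] then (qint q (n.+1)%:Z)^-1 * q ^ y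
      else 0
}.

Variables (q : C) (A : algType C) (star : A -> A) (h : A -> C)
  (t : nat -> int -> int -> A).

Definition fhat (f : A) (n : nat) (x y : int) : C := h (f * star (t n y x)).

(* [2l+1]_q Tr_q(sigma(l) fhat(l) T^l), with D_q = diag(q^{-2i}) *)
Definition Tterm (sigma : nat -> int -> int -> A) (f : A) (n : nat) : A :=
  qint q (n.+1)%:Z *:
  \sum_(i < n.+1) \sum_(j < n.+1) \sum_(k < n.+1)
     (q ^ (- @idx n i) * fhat f n (@idx n j) (@idx n k)) *:
       (sigma n (@idx n i) (@idx n j) * t n (@idx n k) (@idx n i)).

Definition Tpartial (sigma : nat -> int -> int -> A) (f : A) (N : nat) : A :=
  \sum_(n < N) Tterm sigma f n.

(* T_sigma f = sum over all l; the sum is finite for each f (the partial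
   sums are eventually constant) and T_sigma f is its value. *)
Definition eventually_equal (u : nat -> A) (g : A) : Prop :=
  exists N0, forall N, (N0 <= N)%N -> u N = g.

Definition Top (sigma : nat -> int -> int -> A) (f : A) : A :=
  epsilon (inhabits 0) (eventually_equal (Tpartial sigma f)).

Definition homogeneous (M : nat) (sigma : nat -> int -> int -> A) : Prop :=
  forall n, exists psi : int -> int -> int * int,
    (forall x y, inI n x -> inI n y -> inI n (psi x y).1 && inI n (psi x y).2) /\
    (forall x y, inI n x -> inI n y ->
       if inI M (psi x y).1 && inI M (psi x y).2 then
         exists k : C, sigma n x y = k *: t M (psi x y).1 (psi x y).2
       else sigma n x y = 0).

Definition inPhi (M : nat) (sigma : nat -> int -> int -> A) : Prop :=
  exists K (s : 'I_K -> nat -> int -> int -> A) (k : 'I_K -> C),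
    (forall r, homogeneous M (s r)) /\
    (forall n x y, inI n x -> inI n y ->
       sigma n x y = \sum_(r < K) k r *: s r n x y).

Definition finite_rank (T : A -> A) : Prop :=
  exists K (b : 'I_K -> A), forall f, exists k : 'I_K -> C,
    T f = \sum_(r < K) k r *: b r.

End Defs.

(* Main.v *)
Require Import Defs.
From HB Require Import structures.
From mathcomp Require Import all_boot all_order all_algebra.
From Stdlib Require Import ClassicalEpsilon.
From mathcomp Require Import zify.
Import Order.TTheory GRing.Theory Num.Theory.
Local Open Scope ring_scope.

Section FR.
Variables (C : numClosedFieldType) (A : algType C).

Definition FR (g : A -> A) : Prop :=
  exists (I : finType) (b : I -> A), forall f, exists k : I -> C,
    g f = \sum_(i : I) k i *: b i.

Lemma FR_ext {g1 g2} : FR g1 -> (forall f, g1 f = g2 f) -> FR g2.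
Proof.
move=> [I [b H]] e; exists I, b => f; have [k hk] := H f; exists k.
by rewrite -e.
Qed.

Lemma FR_zero : FR (fun _ => 0).
Proof.
exists unit, (fun _ => 0) => f; exists (fun _ => 0).
by rewrite big1 // => i _; rewrite scale0r.
Qed.

Lemma FR_scale_vec (c : A -> C) (v : A) : FR (fun f => c f *: v).
Proof.
exists unit, (fun _ => v) => f; exists (fun _ => c f).
by rewrite (big_pred1 tt).
Qed.

Lemma FR_add {g1 g2} : FR g1 -> FR g2 -> FR (fun f => g1 f + g2 f).
Proof.
move=> [I1 [b1 H1]] [I2 [b2 H2]].
exists (I1 + I2)%type, (fun i => match i with inl i => b1 i | inr i => b2 i end).
move=> f; have [k1 ->] := H1 f; have [k2 ->] := H2 f.
exists (fun i => match i with inl i => k1 i | inr i => k2 i end).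
by rewrite big_sumType.
Qed.

Lemma FR_scale (c : C) g : FR g -> FR (fun f => c *: g f).
Proof.
move=> [I [b H]]; exists I, b => f; have [k ->] := H f.
exists (fun i => c * k i); rewrite scaler_sumr; apply: eq_bigr => i _.
by rewrite scalerA.
Qed.

Lemma FR_sum B (g : 'I_B -> A -> A) :
  (forall r, FR (g r)) -> FR (fun f => \sum_(r < B) g r f).
Proof.
elim: B g => [|B IH] g H.
  by apply: FR_ext FR_zero _ => f; rewrite big_ord0.
have H1 : FR (fun f => \sum_(r < B) g (widen_ord (leqnSn B) r) f).
  by apply: IH => r; apply: H.
apply: (FR_ext (FR_add H1 (H ord_max))) => f.
by rewrite big_ord_recr.
Qed.

Lemma FR_finite_rank g : FR g -> finite_rank g.
Proof.
move=> [I [b H]]; exists #|I|, (fun r => b (enum_val r)) => f.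
have [k ->] := H f; exists (fun r => k (enum_val r)).
by rewrite (big_enum_val (A := predT)).
Qed.
End FR.

Lemma inI_idx n (a : 'I_n.+1) : inI n (idx a).
Proof.
rewrite /inI /idx; have ha := ltn_ord a.
case: (leqP n (2 * a)) => h.
  rewrite subzn // absz_nat oddB // oddM /=.
  by apply/andP; split => //; lia.
rewrite -opprB subzn ?(ltnW h) // abszN absz_nat oddB ?(ltnW h) // oddM /= addbF.
by apply/andP; split => //; lia.
Qed.

Theorem mainTheorem7 (C : numClosedFieldType) (q : C) (A : algType C)
  (a c : A) (star : A -> A) (h : A -> C) (t : nat -> int -> int -> A)
  (hq0 : 0 < q) (hq1 : q < 1)
  (HS : SUq2 q a c star h t)
  (M : nat) (sigma : nat -> int -> int -> A)
  (Hsigma : inPhi t M sigma)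
  (N : nat)
  (Hvanish : forall n, (2 * N < n)%N -> forall x y, inI n x -> inI n y ->
                sigma n x y = 0) :
  finite_rank (Top q star h t sigma).
Proof.
set B := (2 * N).+1.
have Tz : forall f n, (B <= n)%N -> Tterm q star h t sigma f n = 0.
  move=> f n hn; rewrite /Tterm big1 ?scaler0 // => i _.
  rewrite big1 // => j _; rewrite big1 // => k _.
  by rewrite Hvanish ?inI_idx // mul0r scaler0.
have Tp : forall f d, Tpartial q star h t sigma f (B + d) = Tpartial q star h t sigma f B.
  move=> f; elim=> [|d IH]; first by rewrite addn0.
  by rewrite /Tpartial addnS big_ord_recr /= Tz ?leq_addr // addr0.
have E : forall f, Top q star h t sigma f = Tpartial q star h t sigma f B.
  move=> f; rewrite /Top.
  have ex : exists g, eventually_equal (Tpartial q star h t sigma f) g.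
    exists (Tpartial q star h t sigma f B); exists B => n hn.
    by rewrite -(subnKC hn) Tp.
  have [N1 HN1] := epsilon_spec (inhabits 0) _ ex.
  rewrite -(HN1 (B + N1)%N) ?leq_addl //; exact: Tp.
apply: FR_finite_rank; apply: FR_ext _ (fun f => esym (E f)).
rewrite /Tpartial; apply: FR_sum => n; rewrite /Tterm.
apply: FR_scale; apply: FR_sum => i; apply: FR_sum => j; apply: FR_sum => k.
exact: FR_scale_vec.
Qed.
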